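(* For an arrangement $S$ of $\{1,\dots,n^2\}$ in an $n\times n$ grid define \[ E_{\mathrm{low}}(S)=\mathrm{Cov}(X,Z)^2+\mathrm{Cov}(Y,Z)^2+\mathrm{Cov}(D_{\mathrm{main}},Z)^2+\mathrm{Cov}(D_{\mathrm{anti}},Z)^2. \] For $n=3$, $E_{\mathrm{low}}(S)=0$ if and only if $S$ is a magic square. For $n\ge4$, the set of arrangements with $E_{\mathrm{low}}(S)=0$ strictly contains the set of magic squares of order $n$.
   Context: An arrangement is a bijection $(i,j)\mapsto s_{ij}$ from $\{0,\dots,n-1\}^2$ to $\{1,\dots,n^2\}$; it is a magic square if all rows, columns and both main diagonals sum to $n(n^2+1)/2$. $X(i,j)=j-\frac{n-1}{2}$, $Y(i,j)=\frac{n-1}{2}-i$, $Z(i,j)=s_{ij}-\frac{n^2+1}{2}$, $D_{\mathrm{main}}(i,j)=1$ if $i=j$ else $0$, $D_{\mathrm{anti}}(i,j)=1$ if $i+j=n-1$ else $0$. Functions on the grid are random variables under the uniform distribution on cells, with $\mathrm{Cov}(F,G)=\frac1{n^2}\sum_{i,j}(F(i,j)-\bar F)(G(i,j)-\bar G)$. *)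

(* Defs.v *)
From mathcomp Require Import all_boot all_order all_algebra.
Set Implicit Arguments. Unset Strict Implicit. Unset Printing Implicit Defensive.
Import Order.TTheory GRing.Theory Num.Theory.
Local Open Scope ring_scope.

Definition arrangement (n : nat) (s : 'I_n -> 'I_n -> nat) : Prop :=
  (forall i j, (1 <= s i j <= n ^ 2)%N) /\
  (forall i j i' j', s i j = s i' j' -> i = i' /\ j = j') /\
  (forall k, (1 <= k <= n ^ 2)%N -> exists i j, s i j = k).

Definition magic_sum (n : nat) : rat := (n%:R * (n%:R ^+ 2 + 1)) / 2.

Definition magic (n : nat) (s : 'I_n -> 'I_n -> nat) : Prop :=
  (forall i : 'I_n, \sum_(j < n) (s i j)%:R = magic_sum n) /\
  (forall j : 'I_n, \sum_(i < n) (s i j)%:R = magic_sum n) /\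
  \sum_(i < n) (s i i)%:R = magic_sum n /\
  \sum_(i < n) (s i (rev_ord i))%:R = magic_sum n.

(* Functions on the grid as random variables under the uniform distribution. *)
Definition mean (n : nat) (F : 'I_n -> 'I_n -> rat) : rat :=
  (\sum_(i < n) \sum_(j < n) F i j) / (n%:R ^+ 2).

Definition cov (n : nat) (F G : 'I_n -> 'I_n -> rat) : rat :=
  (\sum_(i < n) \sum_(j < n) (F i j - mean F) * (G i j - mean G)) / (n%:R ^+ 2).

Definition Xf (n : nat) : 'I_n -> 'I_n -> rat :=
  fun i j => (j : nat)%:R - (n%:R - 1) / 2.
Definition Yf (n : nat) : 'I_n -> 'I_n -> rat :=
  fun i j => (n%:R - 1) / 2 - (i : nat)%:R.
Definition Zf (n : nat) (s : 'I_n -> 'I_n -> nat) : 'I_n -> 'I_n -> rat :=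
  fun i j => (s i j)%:R - (n%:R ^+ 2 + 1) / 2.
Definition Dmain (n : nat) : 'I_n -> 'I_n -> rat :=
  fun i j => if i == j then 1 else 0.
Definition Danti (n : nat) : 'I_n -> 'I_n -> rat :=
  fun i j => if (i + j == n - 1)%N then 1 else 0.

Arguments Xf n : clear implicits.
Arguments Yf n : clear implicits.
Arguments Dmain n : clear implicits.
Arguments Danti n : clear implicits.

Definition E_low (n : nat) (s : 'I_n -> 'I_n -> nat) : rat :=
  cov (Xf n) (Zf s) ^+ 2 + cov (Yf n) (Zf s) ^+ 2
  + cov (Dmain n) (Zf s) ^+ 2 + cov (Danti n) (Zf s) ^+ 2.

(* Main.v *)
Require Import Defs.
From mathcomp Require Import all_boot all_order all_algebra.
From mathcomp Require Import zify ring lra.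
Set Implicit Arguments. Unset Strict Implicit. Unset Printing Implicit Defensive.
Import Order.TTheory GRing.Theory Num.Theory.

Local Open Scope ring_scope.


Lemma sum_nat_succ (M : nat) :
  \sum_(k < M) ((k.+1)%:R : rat) = (M%:R * (M%:R + 1)) / 2.
Proof.
elim: M => [|M IH]; first by rewrite big_ord0 mul0r.
rewrite big_ord_recr /= IH.
have -> : (M.+1)%:R = M%:R + 1 :> rat by rewrite natr1.
by field.
Qed.

Lemma sum_arr n (s : 'I_n -> 'I_n -> nat) : arrangement s ->
  \sum_i \sum_j ((s i j)%:R : rat) = (n%:R^+2 * (n%:R^+2 + 1)) / 2.
Proof.
case=> rng [inj _].
have lt : forall p : 'I_n * 'I_n, ((s p.1 p.2).-1 < n ^ 2)%N.
  by move=> p; have := rng p.1 p.2; lia.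
pose phi (p : 'I_n * 'I_n) : 'I_(n ^ 2) := Ordinal (lt p).
have phi_inj : injective phi.
  move=> [i j] [i' j'] /(congr1 val) /= h.
  have h1 := rng i j; have h2 := rng i' j'.
  have [-> ->] : i = i' /\ j = j' by apply: inj; lia.
  by [].
have bij : bijective phi.
  apply: inj_card_bij => //.
  have h : (#|'I_(n ^ 2)| <= #|{: 'I_n * 'I_n}|)%N by rewrite card_prod !card_ord mulnn.
  exact: h.
rewrite pair_bigA /=.
have -> : \sum_p ((s p.1 p.2)%:R : rat) = \sum_p (((phi p : nat).+1)%:R).
  apply: eq_bigr => p _ /=. have := rng p.1 p.2. by case: (s p.1 p.2).
rewrite -(reindex phi (P := xpredT) (F := fun k : 'I_(n^2) => ((k : nat).+1)%:R)); last first.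
  by apply: onW_bij.
by rewrite sum_nat_succ natrX.
Qed.

Lemma sum_const_ord n (a : rat) : \sum_(j < n) a = n%:R * a.
Proof. by rewrite sumr_const card_ord mulr_natl. Qed.

Lemma sumZ_arr n (s : 'I_n -> 'I_n -> nat) : arrangement s ->
  \sum_i \sum_j Zf s i j = 0.
Proof.
move=> /sum_arr H. rewrite /Zf.
under eq_bigr => i _ do rewrite sumrB sum_const_ord.
rewrite sumrB sum_const_ord H. by field.
Qed.

Lemma cov_eq n (F G : 'I_n -> 'I_n -> rat) : \sum_i \sum_j G i j = 0 ->
  cov F G = (\sum_i \sum_j F i j * G i j) / n%:R^+2.
Proof.
move=> HG. rewrite /cov /mean HG mul0r.
congr (_ / _).
under eq_bigr => i _ do under eq_bigr => j _ do rewrite subr0 mulrBl.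
under eq_bigr => i _ do rewrite sumrB -mulr_sumr.
by rewrite sumrB -mulr_sumr HG mulr0 subr0.
Qed.

Lemma Elow0 n (s : 'I_n -> 'I_n -> nat) :
  \sum_i \sum_j Zf s i j = 0 ->
  \sum_i \sum_j Xf n i j * Zf s i j = 0 ->
  \sum_i \sum_j Yf n i j * Zf s i j = 0 ->
  \sum_i \sum_j Dmain n i j * Zf s i j = 0 ->
  \sum_i \sum_j Danti n i j * Zf s i j = 0 -> E_low s = 0.
Proof.
move=> H0 H1 H2 H3 H4.
by rewrite /E_low !cov_eq // H1 H2 H3 H4 !mul0r expr0n /= !addr0.
Qed.

Lemma sum_Dmain n (G : 'I_n -> 'I_n -> rat) :
  \sum_i \sum_j Dmain n i j * G i j = \sum_i G i i.
Proof.
apply: eq_bigr => i _. rewrite (bigD1 i) //= /Dmain eqxx mul1r big1 ?addr0 //.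
by move=> j /negbTE; rewrite eq_sym => ->; rewrite mul0r.
Qed.

Lemma sum_Danti n (G : 'I_n -> 'I_n -> rat) :
  \sum_i \sum_j Danti n i j * G i j = \sum_i G i (rev_ord i).
Proof.
apply: eq_bigr => i _. rewrite (bigD1 (rev_ord i)) //= /Danti.
have -> : (i + (n - i.+1) == n - 1)%N by have := ltn_ord i; lia.
rewrite mul1r big1 ?addr0 //.
move=> j Hj. case: eqP => h; last by rewrite mul0r.
exfalso; move/eqP: Hj; apply; apply: val_inj => /=. have := ltn_ord i; lia.
Qed.

Lemma magic_Elow n (s : 'I_n -> 'I_n -> nat) : magic s -> E_low s = 0.
Proof.
case=> [Hr [Hc [Hd Ha]]].
have rowZ : forall i, \sum_j Zf s i j = 0.
  move=> i. rewrite /Zf sumrB sum_const_ord Hr /magic_sum. by field.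
have colZ : forall j, \sum_i Zf s i j = 0.
  move=> j. rewrite /Zf sumrB sum_const_ord Hc /magic_sum. by field.
have H0 : \sum_i \sum_j Zf s i j = 0 by rewrite big1.
apply: Elow0 => //.
- rewrite exchange_big big1 // => j _. by rewrite -mulr_sumr colZ mulr0.
- rewrite big1 // => i _. by rewrite -mulr_sumr rowZ mulr0.
- rewrite sum_Dmain /Zf sumrB sum_const_ord Hd /magic_sum. by field.
- rewrite sum_Danti /Zf sumrB sum_const_ord Ha /magic_sum. by field.
Qed.


Local Close Scope ring_scope.


Ltac splitifs := repeat match goal with |- context[if ?b then _ else _] => case: (boolP b) end.

Definition cyc (N e k : nat) : nat :=
  if k < N.-1 - k then (if (k + e) %% 2 == 1 then N - k else k.+1)
  else (if (N.-1 - k + e) %% 2 == 1 then N - 2 - k else k.-1).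

Definition rA t k := cyc (4*t+4) 0 k.
Definition GA (t : nat) : seq nat := [::].
Definition rB t k := if k == 2*t+2 then k else cyc (4*t+5) 0 k.
Definition GB t : seq nat := [:: 2*t+2].
Definition rC t k :=
  if k == 0 then 2*t+1 else if k == 2*t+1 then 2*t+2 else if k == 2*t+2 then 4*t+5
  else if k == 2*t+3 then 2*t+4 else if k == 2*t+4 then 0 else if k == 4*t+5 then 2*t+3
  else cyc (4*t+6) 1 k.
Definition GC t : seq nat := [:: 0; 2*t+1; 2*t+2; 2*t+3; 2*t+4; 4*t+5].
Definition tblD := [:: 0;3;5;6;4;2;1].
Definition rD t k := if (2*t <= k <= 2*t+6) then 2*t + nth 0 tblD (k - 2*t) else cyc (4*t+7) 0 k.
Definition GD t : seq nat := iota (2*t) 7.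

Lemma tblD_lt i : nth 0 tblD i < 7.
Proof. by do 7! (case: i => [|i] //); rewrite nth_default. Qed.

Lemma rA_lt t k : k < 4*t+4 -> rA t k < 4*t+4.
Proof. rewrite /rA /cyc => H; splitifs; lia. Qed.
Lemma rA_P t k : k < 4*t+4 -> k \notin GA t -> rA t (rA t k) = (4*t+4).-1 - k.
Proof. rewrite /rA /cyc => H _; splitifs; lia. Qed.

Lemma rB_lt t k : k < 4*t+5 -> rB t k < 4*t+5.
Proof. rewrite /rB /cyc => H; splitifs; lia. Qed.
Lemma rB_P t k : k < 4*t+5 -> k \notin GB t -> rB t (rB t k) = (4*t+5).-1 - k.
Proof. rewrite /rB /cyc !inE => H H'; splitifs; lia. Qed.

Lemma rC_lt t k : k < 4*t+6 -> rC t k < 4*t+6.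
Proof. rewrite /rC /cyc => H; splitifs; lia. Qed.
Lemma rC_P t k : k < 4*t+6 -> k \notin GC t -> rC t (rC t k) = (4*t+6).-1 - k.
Proof. rewrite /rC /cyc !inE => H H'; splitifs; lia. Qed.

Lemma rD_lt t k : k < 4*t+7 -> rD t k < 4*t+7.
Proof. rewrite /rD /cyc => H; have := tblD_lt (k - 2*t); splitifs; lia. Qed.
Lemma rD_P t k : k < 4*t+7 -> k \notin GD t -> rD t (rD t k) = (4*t+7).-1 - k.
Proof. rewrite /rD /cyc mem_iota => H H'; splitifs; lia. Qed.


Lemma GB_sym t k : k < 4*t+5 -> k \in GB t -> (4*t+5).-1 - k \in GB t.
Proof. rewrite !inE. lia. Qed.
Lemma rB_T t k : k \in GB t -> rB t k \in GB t.
Proof. rewrite !inE /rB => /eqP ->. by rewrite eqxx. Qed.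
Lemma rB_TI t a b : a \in GB t -> b \in GB t -> rB t a = rB t b -> a = b.
Proof. rewrite !inE => /eqP -> /eqP ->. by []. Qed.

Lemma GC_sym t k : k < 4*t+6 -> k \in GC t -> (4*t+6).-1 - k \in GC t.
Proof. rewrite !inE. lia. Qed.
Lemma rC0 t : rC t 0 = 2*t+1. Proof. by rewrite /rC. Qed.
Lemma rC1 t : rC t (2*t+1) = 2*t+2. Proof. rewrite /rC; splitifs; lia. Qed.
Lemma rC2 t : rC t (2*t+2) = 4*t+5. Proof. rewrite /rC; splitifs; lia. Qed.
Lemma rC3 t : rC t (2*t+3) = 2*t+4. Proof. rewrite /rC; splitifs; lia. Qed.
Lemma rC4 t : rC t (2*t+4) = 0. Proof. rewrite /rC; splitifs; lia. Qed.
Lemma rC5 t : rC t (4*t+5) = 2*t+3. Proof. rewrite /rC; splitifs; lia. Qed.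
Lemma GC_cases t (P : nat -> Prop) : P 0 -> P (2*t+1) -> P (2*t+2) -> P (2*t+3) -> P (2*t+4) -> P (4*t+5) ->
  forall k, k \in GC t -> P k.
Proof.
move=> p0 p1 p2 p3 p4 p5 k. rewrite !inE.
by case/orP=> [/eqP->|/orP[/eqP->|/orP[/eqP->|/orP[/eqP->|/orP[/eqP->|/eqP->]]]]].
Qed.
Lemma rC_T t k : k \in GC t -> rC t k \in GC t.
Proof. move: k; apply: GC_cases; rewrite ?(rC0, rC1, rC2, rC3, rC4, rC5) !inE; lia. Qed.
Lemma rC_TI t a b : a \in GC t -> b \in GC t -> rC t a = rC t b -> a = b.
Proof.
move=> Ha Hb.
move: Ha; rewrite !inE => /orP[/eqP->|/orP[/eqP->|/orP[/eqP->|/orP[/eqP->|/orP[/eqP->|/eqP->]]]]];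
move: Hb; rewrite !inE => /orP[/eqP->|/orP[/eqP->|/orP[/eqP->|/orP[/eqP->|/orP[/eqP->|/eqP->]]]]];
rewrite ?(rC0, rC1, rC2, rC3, rC4, rC5); lia.
Qed.

Lemma memGD t x : (x \in GD t) = (2*t <= x < 2*t + 7).
Proof. by rewrite /GD mem_iota. Qed.
Lemma GD_sym t k : k < 4*t+7 -> k \in GD t -> (4*t+7).-1 - k \in GD t.
Proof. rewrite !memGD. lia. Qed.
Lemma rD_G t d : d < 7 -> rD t (2*t + d) = 2*t + nth 0 tblD d.
Proof. move=> Hd. rewrite /rD. have -> : (2*t <= 2*t + d <= 2*t+6) = true by lia.
by rewrite addKn. Qed.
Lemma rD_T t k : k \in GD t -> rD t k \in GD t.
Proof. rewrite !memGD /rD => H. have := tblD_lt (k - 2*t). splitifs; lia. Qed.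
Lemma rD_TI t a b : a \in GD t -> b \in GD t -> rD t a = rD t b -> a = b.
Proof.
rewrite !memGD => Ha Hb.
have [da Hda ->] : exists2 d, d < 7 & a = 2*t + d by exists (a - 2*t); lia.
have [db Hdb ->] : exists2 d, d < 7 & b = 2*t + d by exists (b - 2*t); lia.
rewrite (rD_G t Hda) (rD_G t Hdb) => /addnI /eqP.
by rewrite nth_uniq // => /eqP ->.
Qed.


Local Open Scope ring_scope.


Definition cands (u : seq nat) := [seq x <- iota 1 9 | x \notin u].
Definition P9 (a b c d e f g h i : nat) : bool :=
  ((a+d+g == c+f+i) && (a+b+c == g+h+i) && (a+e+i == 15) && (c+e+g == 15))%N ==>
  [&& a+b+c == 15, d+e+f == 15, g+h+i == 15, a+d+g == 15, b+e+h == 15 & c+f+i == 15]%N.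
Definition chk : bool :=
  all (fun a => all (fun b => all (fun c => all (fun d => all (fun e =>
  all (fun f => all (fun g => all (fun h => all (fun i => P9 a b c d e f g h i)
  (cands [:: h;g;f;e;d;c;b;a])) (cands [:: g;f;e;d;c;b;a])) (cands [:: f;e;d;c;b;a]))
  (cands [:: e;d;c;b;a])) (cands [:: d;c;b;a])) (cands [:: c;b;a])) (cands [:: b;a]))
  (cands [:: a])) (cands [::]).
Lemma chkT : chk.
Proof. by vm_compute. Qed.

Lemma mem_cands x u : (x \in cands u) = (0 < x <= 9)%N && (x \notin u).
Proof. by rewrite /cands mem_filter mem_iota andbC. Qed.

Lemma P9_of a b c d e f g h i :
  uniq [:: i;h;g;f;e;d;c;b;a] ->
  all (fun x => (0 < x <= 9)%N) [:: a;b;c;d;e;f;g;h;i] -> P9 a b c d e f g h i.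
Proof.
rewrite [uniq _]/=. 
case/andP=> Ui /andP[Uh /andP[Ug /andP[Uf /andP[Ue /andP[Ud /andP[Uc /andP[Ub _]]]]]]].
rewrite /= !andbT => /andP[Ra /andP[Rb /andP[Rc /andP[Rd /andP[Re /andP[Rf /andP[Rg /andP[Rh Ri]]]]]]]].
have := chkT; rewrite /chk.
move=> /allP/(_ a); rewrite mem_cands Ra /= => /(_ isT).
move=> /allP/(_ b); rewrite mem_cands Rb Ub => /(_ isT).
move=> /allP/(_ c); rewrite mem_cands Rc Uc => /(_ isT).
move=> /allP/(_ d); rewrite mem_cands Rd Ud => /(_ isT).
move=> /allP/(_ e); rewrite mem_cands Re Ue => /(_ isT).
move=> /allP/(_ f); rewrite mem_cands Rf Uf => /(_ isT).
move=> /allP/(_ g); rewrite mem_cands Rg Ug => /(_ isT).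
move=> /allP/(_ h); rewrite mem_cands Rh Uh => /(_ isT).
move=> /allP/(_ i); rewrite mem_cands Ri Ui => /(_ isT).
by [].
Qed.

Definition o0 : 'I_3 := @Ordinal 3 0 isT.
Definition o1 : 'I_3 := @Ordinal 3 1 isT.
Definition o2 : 'I_3 := @Ordinal 3 2 isT.

Lemma sum3 (F : 'I_3 -> rat) : \sum_i F i = F o0 + F o1 + F o2.
Proof.
rewrite !big_ord_recr big_ord0 ?add0r /=.
rewrite -[F o0]add0r.
by congr (_ + _ + _ + _); apply: congr1; apply: val_inj.
Qed.

Lemma ord3_ind (P : 'I_3 -> Prop) : P o0 -> P o1 -> P o2 -> forall i, P i.
Proof.
move=> p0 p1 p2 [[|[|[|k]]] Hk] //.
- by rewrite (_ : Ordinal Hk = o0) //; apply: val_inj.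
- by rewrite (_ : Ordinal Hk = o1) //; apply: val_inj.
- by rewrite (_ : Ordinal Hk = o2) //; apply: val_inj.
Qed.

Lemma sq4 (a b c d : rat) : a^+2 + b^+2 + c^+2 + d^+2 = 0 -> [/\ a = 0, b = 0, c = 0 & d = 0].
Proof.
move/eqP. rewrite !paddr_eq0 ?addr_ge0 ?sqr_ge0 // !sqrf_eq0.
by case/andP=> /andP[/andP[/eqP -> /eqP ->] /eqP ->] /eqP ->.
Qed.

Lemma natr_eq (x y : nat) : (x%:R : rat) = y%:R -> x = y.
Proof. by move/eqP; rewrite eqr_nat => /eqP. Qed.

Lemma ms3 : magic_sum 3 = 15%:R.
Proof. by apply/eqP; vm_compute. Qed.

Lemma div9 (x : rat) : x / 3%:R ^+ 2 = 0 -> x = 0.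
Proof.
move=> h. have nz : (3%:R ^+ 2 : rat) != 0 by rewrite expf_eq0 pnatr_eq0.
by rewrite -(divfK nz x) h mul0r.
Qed.

Lemma n3_main (s : 'I_3 -> 'I_3 -> nat) : arrangement s -> E_low s = 0 -> magic s.
Proof.
move=> Har HE.
have HZ := sumZ_arr Har.
move: HE; rewrite /E_low !cov_eq // => /sq4 [/div9 e1 /div9 e2 /div9 e3 /div9 e4].
rewrite sum_Dmain in e3. rewrite sum_Danti in e4.
have r0 : rev_ord o0 = o2 by apply: val_inj.
have r1 : rev_ord o1 = o1 by apply: val_inj.
have r2 : rev_ord o2 = o0 by apply: val_inj.
rewrite !sum3 r0 r1 r2 in e3 e4.
rewrite !sum3 in e1 e2.
rewrite /Xf /Yf /Zf /= in e1 e2 e3 e4.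
have n9 : (3%:R ^+ 2 : rat) = 9%:R by rewrite -natrX.
rewrite n9 in e1 e2 e3 e4.
set a := s o0 o0 in e1 e2 e3 e4 *. set b := s o0 o1 in e1 e2 e3 e4 *.
set c := s o0 o2 in e1 e2 e3 e4 *. set d := s o1 o0 in e1 e2 e3 e4 *.
set e := s o1 o1 in e1 e2 e3 e4 *. set f := s o1 o2 in e1 e2 e3 e4 *.
set g := s o2 o0 in e1 e2 e3 e4 *. set h := s o2 o1 in e1 e2 e3 e4 *.
set i := s o2 o2 in e1 e2 e3 e4 *.
have c1 : (a + d + g = c + f + i)%N by apply: natr_eq; rewrite !natrD; lra.
have c2 : (a + b + c = g + h + i)%N by apply: natr_eq; rewrite !natrD; lra.
have c3 : (a + e + i = 15)%N by apply: natr_eq; rewrite !natrD; lra.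
have c4 : (c + e + g = 15)%N by apply: natr_eq; rewrite !natrD; lra.
case: Har => rng [inj _].
have U : uniq [:: i;h;g;f;e;d;c;b;a].
  have -> : [:: i;h;g;f;e;d;c;b;a] = [seq s p.1 p.2 | p <- [:: (o2,o2);(o2,o1);(o2,o0);(o1,o2);(o1,o1);(o1,o0);(o0,o2);(o0,o1);(o0,o0)]] by [].
  rewrite map_inj_uniq //.
  by move=> [x y] [x' y'] /= /inj [-> ->].
have R : all (fun x => (0 < x <= 9)%N) [:: a;b;c;d;e;f;g;h;i] by rewrite /= !rng.
have := P9_of U R. rewrite /P9 c1 c2 c3 c4 !eqxx /=.
case/andP => /eqP R1 /and5P[/eqP R2 /eqP R3 /eqP C1 /eqP C2 /eqP C3].
split; [|split; [|split]].
- apply: ord3_ind; rewrite sum3 -!natrD ms3; congr (_%:R); lia.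
- apply: ord3_ind; rewrite sum3 -!natrD ms3; congr (_%:R); lia.
- rewrite sum3 -!natrD ms3; congr (_%:R); lia.
- rewrite sum3 r0 r1 r2 -!natrD ms3; congr (_%:R); lia.
Qed.


Section Gen.
Variable N : nat.
Definition cN : rat := (N%:R - 1) / 2.

Definition mkO (r : nat -> nat) (k : 'I_N) : 'I_N := insubd k (r k).
Lemma mkO_val r : (forall k, k < N -> r k < N)%N -> forall k, val (mkO r k) = r k.
Proof. move=> H k. by rewrite /mkO val_insubd H. Qed.

Lemma mkO_inj r (G : seq nat) :
  (forall k, k < N -> r k < N)%N ->
  (forall k, k < N -> k \notin G -> r (r k) = N.-1 - k)%N ->
  (forall k, k < N -> k \in G -> N.-1 - k \in G)%N ->
  (forall k, k \in G -> r k \in G) ->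
  (forall a b, a \in G -> b \in G -> r a = r b -> a = b) ->
  injective (mkO r).
Proof.
move=> Hlt HP Hs HT HTI a b /(congr1 val); rewrite !mkO_val // => e.
apply: ord_inj.
have Ha := ltn_ord a; have Hb := ltn_ord b.
have notG : forall k, (k < N)%N -> k \notin G -> (N.-1 - k)%N \notin G.
  move=> k Hk Hn; apply/negP => /(Hs _ _) H.
  have : (N.-1 - (N.-1 - k))%N \in G by apply: H; lia.
  have -> : (N.-1 - (N.-1 - k) = k)%N by lia.
  by rewrite (negbTE Hn).
have e2 : r (r a) = r (r b) by rewrite e.
case: (boolP (nat_of_ord a \in G)) => Ga; case: (boolP (nat_of_ord b \in G)) => Gb.
- exact: HTI.
- exfalso. move: e2. rewrite (HP b) // => e2.
  have : r (r a) \in G by exact: (HT _ (HT _ Ga)).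
  by rewrite e2 (negbTE (notG _ Hb Gb)).
- exfalso. move: e2. rewrite (HP a) // => e2.
  have : r (r b) \in G by exact: (HT _ (HT _ Gb)).
  by rewrite -e2 (negbTE (notG _ Ha Ga)).
- move: e2. rewrite !HP //. lia.
Qed.

Definition rt (rho : 'I_N -> 'I_N) (k : 'I_N) : rat := (rho k : nat)%:R - cN.
Definition corr (rho : 'I_N -> 'I_N) := \sum_(k < N) ((k : nat)%:R - cN) * rt rho k.

Lemma sum_centered : \sum_(k < N) ((k:nat)%:R - cN) = 0.
Proof.
have h := sum_nat_succ N.
have e : \sum_(k<N) ((k.+1)%:R : rat) = \sum_(k < N) (k:nat)%:R + N%:R.
  under eq_bigr do rewrite -natr1. by rewrite big_split /= sum_const_ord mulr1.
rewrite sumrB sum_const_ord. have : \sum_(k < N) ((k:nat)%:R : rat) = N%:R * (N%:R + 1) / 2 - N%:R.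
  by rewrite -h e addrK.
move=> ->. rewrite /cN. by field.
Qed.

Lemma sum_rt rho : injective rho -> \sum_k rt rho k = 0.
Proof.
move=> inj. have := reindex_inj (P := xpredT) (F := fun k : 'I_N => (k : nat)%:R - cN) inj.
rewrite /= => <-. exact: sum_centered.
Qed.

End Gen.


Section Gen2.
Variable N : nat.

Lemma big_G (G : seq nat) (h : nat -> rat) : uniq G -> all (fun g => (g < N)%N) G ->
  \sum_(k < N | (k : nat) \in G) h k = \sum_(g <- G) h g.
Proof.
move=> UG AG.
rewrite -(big_mkord (fun k => k \in G) h) /index_iota subn0 -big_filter.
apply: perm_big. apply: uniq_perm; first by rewrite filter_uniq // iota_uniq.
  by [].
move=> x. rewrite mem_filter mem_iota add0n /=.
case Hx: (x \in G) => //=. by move/allP: AG => /(_ x Hx).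
Qed.

Lemma corr_gadget (rho : 'I_N -> 'I_N) (r : nat -> nat) (G : seq nat) :
  (forall k, val (rho k) = r (val k)) -> injective rho ->
  (forall k : 'I_N, (k : nat) \notin G -> r (r k) = (N.-1 - k)%N) ->
  2 * corr rho = \sum_(k < N | (k : nat) \in G)
     ((k%:R - cN N) * ((r k)%:R - cN N) + ((r k)%:R - cN N) * ((r (r k))%:R - cN N)).
Proof.
move=> Hv inj HP.
have e : corr rho = \sum_(k < N) ((rho k : nat)%:R - cN N) * rt rho (rho k).
  rewrite /corr. exact: (reindex_inj (P := xpredT) (F := fun k : 'I_N => ((k : nat)%:R - cN N) * rt rho k) inj).
have -> : 2 * corr rho = corr rho + corr rho by rewrite mulr2n mulrDl mul1r.
rewrite {2}e /corr -big_split /=.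
rewrite (bigID (fun k : 'I_N => (k : nat) \in G)) /=.
rewrite [X in _ + X]big1 ?addr0; last first.
  move=> k Hk. rewrite /rt !Hv HP //.
  have Hk' := ltn_ord k.
  rewrite natrB; last by lia.
  have -> : ((N.-1)%:R : rat) = N%:R - 1.
    have hN : N = (N.-1).+1 by lia.
    by rewrite [in RHS]hN -natr1 addrK.
  rewrite /cN. by field.
apply: eq_bigr => k _. by rewrite /rt !Hv.
Qed.

Definition tf (rho : 'I_N -> 'I_N) (i j : 'I_N) : nat := (N * rho i + rho j + 1)%N.

Lemma tf_arr rho : injective rho -> arrangement (tf rho).
Proof.
move=> inj. have [g rg gr] := injF_bij inj.
split; [|split].
- move=> i j. rewrite /tf. have := ltn_ord (rho i); have := ltn_ord (rho j).
  move=> h1 h2. apply/andP; split; first by lia.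
  have : (N * rho i <= N * N.-1)%N by rewrite leq_mul2l; apply/orP; right; lia.
  have : (N * N.-1 + N = N ^ 2)%N. rewrite -mulnSr prednK ?mulnn //. lia.
  lia.
- move=> i j i' j'. rewrite /tf => e.
  have Hj := ltn_ord (rho j); have Hj' := ltn_ord (rho j').
  have e1 : (rho i * N + rho j = rho i' * N + rho j')%N by lia.
  have ej : (rho j : nat) = rho j'.
    by move: (congr1 (modn^~ N) e1); rewrite /= !modnMDl !modn_small.
  have ei : (rho i : nat) = rho i'.
    have Np : (0 < N)%N by lia.
    apply/eqP; rewrite -(eqn_pmul2l Np); apply/eqP; lia.
  by split; apply: inj; apply: val_inj.
- move=> k /andP[k1 k2].
  have Npos : (0 < N)%N by case: N k2 => //=; rewrite exp0n //; lia.
  have q_lt : ((k.-1) %/ N < N)%N by rewrite ltn_divLR // mulnn; lia.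
  have r_lt : ((k.-1) %% N < N)%N by rewrite ltn_mod.
  exists (g (Ordinal q_lt)), (g (Ordinal r_lt)).
  rewrite /tf !gr /= mulnC -divn_eq. lia.
Qed.
End Gen2.


Section Gen3.
Variable N : nat.
Variable rho : 'I_N -> 'I_N.
Hypothesis inj : injective rho.

Lemma Zt i j : Zf (tf rho) i j = N%:R * rt rho i + rt rho j.
Proof. rewrite /Zf /tf /rt /cN !natrD natrM. by field. Qed.

Lemma Xf_c i j : Xf N i j = (j : nat)%:R - cN N. Proof. by []. Qed.
Lemma Yf_c i j : Yf N i j = - ((i : nat)%:R - cN N). Proof. by rewrite /Yf /cN opprB. Qed.

Lemma St_X : \sum_i \sum_j Xf N i j * Zf (tf rho) i j = N%:R * corr rho.
Proof.
under eq_bigr => i _ do under eq_bigr => j _ do rewrite Zt mulrDr Xf_c.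
under eq_bigr => i _ do rewrite big_split /= -mulr_suml sum_centered mul0r add0r.
by rewrite sum_const_ord.
Qed.

Lemma St_Y : \sum_i \sum_j Yf N i j * Zf (tf rho) i j = - (N%:R ^+ 2 * corr rho).
Proof.
under eq_bigr => i _ do under eq_bigr => j _ do rewrite Zt mulrDr Yf_c.
under eq_bigr => i _ do rewrite big_split /= -!mulr_sumr (sum_rt inj) mulr0 addr0 sum_const_ord.
rewrite /corr mulr_sumr -sumrN. apply: eq_bigr => i _. ring.
Qed.

Lemma St_D : \sum_i \sum_j Dmain N i j * Zf (tf rho) i j = 0.
Proof.
rewrite sum_Dmain. under eq_bigr => i _ do rewrite Zt.
by rewrite big_split /= -mulr_sumr !(sum_rt inj) mulr0 addr0.
Qed.

Lemma St_A : \sum_i \sum_j Danti N i j * Zf (tf rho) i j = 0.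
Proof.
rewrite sum_Danti. under eq_bigr => i _ do rewrite Zt.
rewrite big_split /= -mulr_sumr (sum_rt inj) mulr0 add0r.
have := reindex_inj (P := xpredT) (F := fun k : 'I_N => rt rho k) (@rev_ord_inj N).
rewrite /= => <-. exact: sum_rt.
Qed.

Lemma St_row i : \sum_j Zf (tf rho) i j = N%:R * N%:R * rt rho i.
Proof.
under eq_bigr => j _ do rewrite Zt.
by rewrite big_split /= (sum_rt inj) addr0 sum_const_ord mulrA.
Qed.
End Gen3.


Definition tsw (T : eqType) (p q c : T) : T := if c == p then q else if c == q then p else c.

Lemma tswK (T : eqType) (p q : T) : involutive (tsw p q).
Proof.
move=> c; rewrite /tsw.
case: (eqVneq c p) => [->|ncp]; first by rewrite eqxx; case: eqP.
case: (eqVneq c q) => [->|ncq]; first by rewrite eqxx.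
by rewrite (negbTE ncp) (negbTE ncq).
Qed.

Lemma tsw_id (T : eqType) (p c : T) : tsw p p c = c.
Proof. by rewrite /tsw; case: eqP => [->|]. Qed.

Lemma sum2D (T : finType) (h : T -> rat) (p q : T) : p != q ->
  \sum_c h c = h p + h q + \sum_(c | (c != p) && (c != q)) h c.
Proof.
move=> npq. rewrite (bigD1 p) //= (bigD1 q) /=; last by rewrite eq_sym.
by rewrite addrA.
Qed.

Lemma sum_swap (T : finType) (F g : T -> rat) (p q : T) :
  \sum_c F c * g (tsw p q c) = \sum_c F c * g c + (F p - F q) * (g q - g p).
Proof.
case: (eqVneq p q) => [<-|npq].
  rewrite subrr mul0r addr0. by apply: eq_bigr => c _; rewrite tsw_id.
rewrite !(sum2D _ npq).
have -> : \sum_(i | (i != p) && (i != q)) F i * g (tsw p q i) =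
          \sum_(i | (i != p) && (i != q)) F i * g i.
  apply: eq_bigr => c /andP[h1 h2]. by rewrite /tsw (negbTE h1) (negbTE h2).
have e1 : tsw p q p = q by rewrite /tsw eqxx.
have e2 : tsw p q q = p by rewrite /tsw eqxx eq_sym (negbTE npq).
rewrite e1 e2. ring.
Qed.

Lemma arr_comp n (t : 'I_n -> 'I_n -> nat) (sg sg' : 'I_n * 'I_n -> 'I_n * 'I_n) :
  arrangement t -> cancel sg sg' -> cancel sg' sg ->
  arrangement (fun i j => t (sg (i,j)).1 (sg (i,j)).2).
Proof.
case=> rng [inj sur] K1 K2. split; [|split].
- by move=> i j; apply: rng.
- move=> i j i' j' e. have [h1 h2] := inj _ _ _ _ e.
  have : sg (i,j) = sg (i',j').
    by move: h1 h2; case: (sg (i,j)) => a b; case: (sg (i',j')) => a' b' /= -> ->.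
  by move/(can_inj K1) => [-> ->].
- move=> k hk. have [i [j e]] := sur k hk.
  exists (sg' (i,j)).1, (sg' (i,j)).2. by rewrite -surjective_pairing K2.
Qed.

Section Constr.
Variable N : nat.
Variable rho : 'I_N -> 'I_N.
Variables k1 k2 l0 : 'I_N.

Definition tau1 := tsw (k1,l0) (k2,l0).
Definition tau2 := tsw (l0,k1) (l0,k2).
Definition sg c := tau1 (tau2 c).
Definition sf (i j : 'I_N) : nat := tf rho (sg (i,j)).1 (sg (i,j)).2.
Definition Gt (c : 'I_N * 'I_N) := Zf (tf rho) c.1 c.2.

Lemma sf_arr : injective rho -> arrangement sf.
Proof.
move=> inj. apply: (arr_comp (sg' := fun c => tau2 (tau1 c))) (tf_arr inj) _ _.
- by move=> c; rewrite /sg /tau1 /tau2 !tswK.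
- by move=> c; rewrite /sg /tau1 /tau2 !tswK.
Qed.

Lemma sum_sf (F : 'I_N -> 'I_N -> rat) : l0 != k1 -> l0 != k2 ->
  \sum_i \sum_j F i j * Zf sf i j = \sum_i \sum_j F i j * Zf (tf rho) i j
   + (F k1 l0 - F k2 l0) * (Gt (k2,l0) - Gt (k1,l0))
   + (F l0 k1 - F l0 k2) * (Gt (l0,k2) - Gt (l0,k1)).
Proof.
move=> h1 h2. rewrite !pair_bigA.
have -> : \sum_p F p.1 p.2 * Zf sf p.1 p.2 =
          \sum_p (fun c => F c.1 c.2) p * (fun c => Gt (tau1 c)) (tau2 p).
  by apply: eq_bigr => [[i j]] _.
rewrite /tau2 (sum_swap (fun c => F c.1 c.2) (fun c => Gt (tau1 c)) (l0,k1) (l0,k2)) /=.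
rewrite {1}/tau1 (sum_swap (fun c => F c.1 c.2) Gt (k1,l0) (k2,l0)) /=.
have e1 : tau1 (l0,k1) = (l0,k1).
  rewrite /tau1 /tsw; case: eqP => [[E _]|_]; first by move: h1; rewrite E eqxx.
  by case: eqP => [[E _]|_] //; move: h2; rewrite E eqxx.
have e2 : tau1 (l0,k2) = (l0,k2).
  rewrite /tau1 /tsw; case: eqP => [[E _]|_]; first by move: h1; rewrite E eqxx.
  by case: eqP => [[E _]|_] //; move: h2; rewrite E eqxx.
by rewrite e1 e2.
Qed.
End Constr.


Lemma tsw_out (T : eqType) (p q c : T) : c != p -> c != q -> tsw p q c = c.
Proof. by rewrite /tsw => /negbTE -> /negbTE ->. Qed.

Lemma rt_nz N (rho : 'I_N -> 'I_N) i : (2 * rho i != N.-1)%N -> rt rho i != 0.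
Proof.
move=> h. rewrite /rt /cN subr_eq0. apply/negP => /eqP e.
have : ((2 * rho i)%:R : rat) = (N.-1)%:R.
  have Np : (0 < N)%N by have := ltn_ord i; lia.
  have hN : N = (N.-1).+1 by lia.
  rewrite natrM e. rewrite [in N%:R]hN -natr1. by field.
by move/eqP; rewrite eqr_nat (negbTE h).
Qed.

Theorem construct N (rho : 'I_N -> 'I_N) (k1 k2 l0 istar : 'I_N) :
  injective rho ->
  ((k2:nat)%:R - (k1:nat)%:R) * ((rho k2 : nat)%:R - (rho k1 : nat)%:R) = N%:R * corr rho ->
  (k1 = k2 \/ [/\ l0 != k1, l0 != k2, (l0 + k1 != N - 1)%N & (l0 + k2 != N - 1)%N]) ->
  (2 * rho istar != N.-1)%N ->
  (k1 = k2 \/ [/\ istar != k1, istar != k2 & istar != l0]) ->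
  exists s : 'I_N -> 'I_N -> nat, arrangement s /\ E_low s = 0 /\ ~ magic s.
Proof.
move=> inj Hw Hsw Hst Hrow.
have Np : (0 < N)%N by have := ltn_ord istar; lia.
have Nnz : (N%:R : rat) != 0 by rewrite pnatr_eq0 -lt0n.
exists (sf rho k1 k2 l0). split; first exact: sf_arr.
have HZ := sumZ_arr (sf_arr k1 k2 l0 inj).
have row_ok : forall j, sf rho k1 k2 l0 istar j = tf rho istar j.
  move=> j. rewrite /sf. have -> : sg k1 k2 l0 (istar, j) = (istar, j).
    rewrite /sg /tau1 /tau2. case: Hrow => [<-|[a1 a2 a3]]; first by rewrite !tsw_id.
    by rewrite !tsw_out // xpair_eqE ?(negbTE a1) ?(negbTE a2) ?(negbTE a3).
  by [].
split; last first.
  case=> Hr _. have := Hr istar.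
  have e : \sum_j Zf (sf rho k1 k2 l0) istar j = \sum_j Zf (tf rho) istar j.
    by apply: eq_bigr => j _; rewrite /Zf row_ok.
  move=> h. move: e. rewrite (St_row inj) /Zf sumrB sum_const_ord h /magic_sum.
  have -> : N%:R * (N%:R ^+ 2 + 1) / 2 - N%:R * ((N%:R ^+ 2 + 1) / 2) = 0 :> rat by field.
  move/esym/eqP. rewrite !mulf_eq0 (negbTE Nnz) /=. by rewrite (negbTE (rt_nz Hst)).
case: Hsw => [E|[h1 h2 h3 h4]].
  subst k2. move: Hw. rewrite !subrr mul0r => /esym/eqP. rewrite mulf_eq0 (negbTE Nnz) /= => /eqP c0.
  have sfE : forall i j, sf rho k1 k1 l0 i j = tf rho i j by move=> i j; rewrite /sf /sg /tau1 /tau2 !tsw_id.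
  have ZE : forall i j, Zf (sf rho k1 k1 l0) i j = Zf (tf rho) i j by move=> i j; rewrite /Zf sfE.
  apply: Elow0 => //.
  - under eq_bigr => i _ do under eq_bigr => j _ do rewrite ZE. by rewrite St_X c0 mulr0.
  - under eq_bigr => i _ do under eq_bigr => j _ do rewrite ZE. by rewrite (St_Y inj) c0 mulr0 oppr0.
  - under eq_bigr => i _ do under eq_bigr => j _ do rewrite ZE. by rewrite (St_D inj).
  - under eq_bigr => i _ do under eq_bigr => j _ do rewrite ZE. by rewrite (St_A inj).
have GtE : forall c, Gt rho c = N%:R * rt rho c.1 + rt rho c.2 by move=> c; rewrite /Gt Zt.
apply: Elow0 => //.
- rewrite (sum_sf _ _ h1 h2) St_X !GtE /= !Xf_c /rt. rewrite -Hw. ring.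
- rewrite (sum_sf _ _ h1 h2) (St_Y inj) !GtE /= !Yf_c /rt.
  have -> : (N%:R ^+ 2 : rat) * corr rho = N%:R * (N%:R * corr rho) by rewrite expr2 mulrA.
  rewrite -Hw. ring.
- have d1 : Dmain N k1 l0 = 0 by rewrite /Dmain eq_sym (negbTE h1).
  have d2 : Dmain N k2 l0 = 0 by rewrite /Dmain eq_sym (negbTE h2).
  have d3 : Dmain N l0 k1 = 0 by rewrite /Dmain (negbTE h1).
  have d4 : Dmain N l0 k2 = 0 by rewrite /Dmain (negbTE h2).
  rewrite (sum_sf _ _ h1 h2) (St_D inj) d1 d2 d3 d4 subrr !mul0r. by rewrite !addr0.
- have d1 : Danti N k1 l0 = 0 by rewrite /Danti addnC (negbTE h3).
  have d2 : Danti N k2 l0 = 0 by rewrite /Danti addnC (negbTE h4).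
  have d3 : Danti N l0 k1 = 0 by rewrite /Danti (negbTE h3).
  have d4 : Danti N l0 k2 = 0 by rewrite /Danti (negbTE h4).
  rewrite (sum_sf _ _ h1 h2) (St_A inj) d1 d2 d3 d4 subrr !mul0r. by rewrite !addr0.
Qed.


Lemma caseA t : exists s : 'I_(4*t+4) -> 'I_(4*t+4) -> nat, arrangement s /\ E_low s = 0 /\ ~ magic s.
Proof.
pose N := (4*t+4)%N.
have lt : forall k, (k < N)%N -> (rA t k < N)%N by move=> k; apply: rA_lt.
pose rho := mkO (rA t) (N:=N).
have Hv : forall k, val (rho k) = rA t k by apply: mkO_val.
have inj : injective rho.
  apply: (@mkO_inj N (rA t) [::]) => //.
  by move=> k Hk _; apply: rA_P.
have c0 : corr rho = 0.
  have := corr_gadget Hv inj (G := [::]) _.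
  rewrite big_pred0 => [|k]; last by rewrite in_nil.
  move/(_ (fun k _ => rA_P (ltn_ord k) isT)).
  by move/eqP; rewrite mulf_eq0 /= => /eqP.
have o0 : (0 < N)%N by rewrite /N; lia.
have o2 : (4*t+2 < N)%N by rewrite /N; lia.
apply: (construct (k1 := Ordinal o0) (k2 := Ordinal o0) (l0 := Ordinal o0) (istar := Ordinal o2) inj).
- by rewrite subrr mul0r c0 mulr0.
- by left.
- rewrite Hv /= /rA /cyc; splitifs; lia.
- by left.
Qed.

Lemma corr_val N (rho : 'I_N -> 'I_N) (r : nat -> nat) (G : seq nat) :
  (forall k, val (rho k) = r (val k)) -> injective rho ->
  (forall k : 'I_N, (k : nat) \notin G -> r (r k) = (N.-1 - k)%N) ->
  uniq G -> all (fun g => (g < N)%N) G ->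
  2 * corr rho = \sum_(g <- G)
     ((g%:R - cN N) * ((r g)%:R - cN N) + ((r g)%:R - cN N) * ((r (r g))%:R - cN N)).
Proof.
move=> Hv inj HP UG AG. rewrite (corr_gadget Hv inj HP).
exact: (big_G (fun g => (g%:R - cN N) * ((r g)%:R - cN N) + ((r g)%:R - cN N) * ((r (r g))%:R - cN N)) UG AG).
Qed.

Lemma two_corr (x : rat) : 2 * x = 0 -> x = 0.
Proof. by move/eqP; rewrite mulf_eq0 /= => /eqP. Qed.

Lemma caseB t : exists s : 'I_(4*t+5) -> 'I_(4*t+5) -> nat, arrangement s /\ E_low s = 0 /\ ~ magic s.
Proof.
pose N := (4*t+5)%N.
have lt : forall k, (k < N)%N -> (rB t k < N)%N by move=> k; apply: rB_lt.
pose rho := mkO (rB t) (N:=N).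
have Hv : forall k, val (rho k) = rB t k by apply: mkO_val.
have inj : injective rho.
  apply: (@mkO_inj N (rB t) (GB t)) => //.
  - by move=> k Hk; apply: rB_P.
  - by move=> k Hk; apply: GB_sym.
  - by move=> k; apply: rB_T.
  - by move=> a b; apply: rB_TI.
have c0 : corr rho = 0.
  apply: two_corr.
  rewrite (corr_val Hv inj (G := GB t)); first last.
  - by rewrite /= andbT /N; lia.
  - by [].
  - by move=> k Hk; apply: rB_P.
  rewrite big_cons big_nil addr0 /rB !eqxx /cN /N.
  rewrite !natrD ?natrM. by field.
have o0 : (0 < N)%N by rewrite /N; lia.
have o2 : (4*t+3 < N)%N by rewrite /N; lia.
apply: (construct (k1 := Ordinal o0) (k2 := Ordinal o0) (l0 := Ordinal o0) (istar := Ordinal o2) inj).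
- by rewrite subrr mul0r c0 mulr0.
- by left.
- rewrite Hv /= /rB /cyc; splitifs; lia.
- by left.
Qed.

Lemma caseC t : exists s : 'I_(4*t+6) -> 'I_(4*t+6) -> nat, arrangement s /\ E_low s = 0 /\ ~ magic s.
Proof.
pose N := (4*t+6)%N.
have lt : forall k, (k < N)%N -> (rC t k < N)%N by move=> k; apply: rC_lt.
pose rho := mkO (rC t) (N:=N).
have Hv : forall k, val (rho k) = rC t k by apply: mkO_val.
have inj : injective rho.
  apply: (@mkO_inj N (rC t) (GC t)) => //.
  - by move=> k Hk; apply: rC_P.
  - by move=> k Hk; apply: GC_sym.
  - by move=> k; apply: rC_T.
  - by move=> a b; apply: rC_TI.
have c0 : corr rho = 3%:R / 2.
  have : 2 * corr rho = 3%:R.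
  rewrite (corr_val Hv inj (G := GC t)); first last.
  - rewrite /GC /= /N. lia.
  - rewrite /GC /= !inE. lia.
  - by move=> k Hk; apply: rC_P.
  rewrite /GC !big_cons big_nil.
  move: (rC0 t) (rC1 t) (rC2 t) (rC3 t) (rC4 t) (rC5 t).
  generalize (rC t) => f e0 e1 e2 e3 e4 e5.
  rewrite ?e0 ?e1 ?e2 ?e3 ?e4 ?e5 ?e0 ?e1 ?e2 ?e3 ?e4 ?e5.
  have ec : cN N = ((4*t+6)%:R - 1)/2 by [].
  move: ec; generalize (cN N) => c ->.
  rewrite !natrD ?natrM. by field.
  move=> h. lra.
have o0 : (0 < N)%N by rewrite /N; lia.
have o1 : (1 < N)%N by rewrite /N; lia.
have o3 : (2*t+3 < N)%N by rewrite /N; lia.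
have o4 : (2*t+4 < N)%N by rewrite /N; lia.
apply: (construct (k1 := Ordinal o0) (k2 := Ordinal o3) (l0 := Ordinal o1) (istar := Ordinal o4) inj).
- rewrite !Hv /= rC0 rC3 c0 /N !natrD ?natrM. by field.
- right; split; rewrite /N /=; try (apply/eqP => /(congr1 val) /=); lia.
- rewrite Hv /= rC4 /N. lia.
- right; split; rewrite /=; try (apply/eqP => /(congr1 val) /=); lia.
Qed.

Lemma caseD t : exists s : 'I_(4*t+7) -> 'I_(4*t+7) -> nat, arrangement s /\ E_low s = 0 /\ ~ magic s.
Proof.
pose N := (4*t+7)%N.
have lt : forall k, (k < N)%N -> (rD t k < N)%N by move=> k; apply: rD_lt.
pose rho := mkO (rD t) (N:=N).
have Hv : forall k, val (rho k) = rD t k by apply: mkO_val.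
have inj : injective rho.
  apply: (@mkO_inj N (rD t) (GD t)) => //.
  - by move=> k Hk; apply: rD_P.
  - by move=> k Hk; apply: GD_sym.
  - by move=> k; apply: rD_T.
  - by move=> a b; apply: rD_TI.
have c0 : corr rho = 0.
  apply: two_corr.
  rewrite (corr_val Hv inj (G := GD t)); first last.
  - apply/allP => x; rewrite memGD /N. lia.
  - by rewrite /GD iota_uniq.
  - by move=> k Hk; apply: rD_P.
  rewrite /GD -[X in iota X _]addn0 iotaDl big_map.
  rewrite (_ : iota 0 7 = [:: 0;1;2;3;4;5;6])%N // !big_cons big_nil.
  have e0 : rD t (2*t + 0) = (2*t + 0)%N := rD_G t (d:=0) isT.
  have e1 : rD t (2*t + 1) = (2*t + 3)%N := rD_G t (d:=1) isT.
  have e2 : rD t (2*t + 2) = (2*t + 5)%N := rD_G t (d:=2) isT.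
  have e3 : rD t (2*t + 3) = (2*t + 6)%N := rD_G t (d:=3) isT.
  have e4 : rD t (2*t + 4) = (2*t + 4)%N := rD_G t (d:=4) isT.
  have e5 : rD t (2*t + 5) = (2*t + 2)%N := rD_G t (d:=5) isT.
  have e6 : rD t (2*t + 6) = (2*t + 1)%N := rD_G t (d:=6) isT.
  move: e0 e1 e2 e3 e4 e5 e6. generalize (rD t) => f e0 e1 e2 e3 e4 e5 e6.
  rewrite ?e0 ?e1 ?e2 ?e3 ?e4 ?e5 ?e6 ?e0 ?e1 ?e2 ?e3 ?e4 ?e5 ?e6.
  have ec : cN N = ((4*t+7)%:R - 1)/2 by [].
  move: ec; generalize (cN N) => c ->.
  rewrite !natrD ?natrM. by field.
have o0 : (0 < N)%N by rewrite /N; lia.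
have o5 : (4*t+5 < N)%N by rewrite /N; lia.
apply: (construct (k1 := Ordinal o0) (k2 := Ordinal o0) (l0 := Ordinal o0) (istar := Ordinal o5) inj).
- by rewrite subrr mul0r c0 mulr0.
- by left.
- rewrite Hv /=. case: t @N lt rho Hv inj c0 o0 o5 => [|t'] N lt rho Hv inj c0 o0 o5; first by [].
  rewrite /rD /cyc; splitifs; lia.
- by left.
Qed.

Theorem part2 n : (4 <= n)%N ->
  exists s : 'I_n -> 'I_n -> nat, arrangement s /\ E_low s = 0 /\ ~ magic s.
Proof.
move=> Hn.
have [t [e|e|e|e]] : exists t, [\/ n = (4*t+4)%N, n = (4*t+5)%N, n = (4*t+6)%N | n = (4*t+7)%N].
  exists (n %/ 4 - 1)%N. have := divn_eq n 4. have := ltn_pmod n (isT : (0 < 4)%N).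
  case Hr: (n %% 4)%N => [|[|[|[|r]]]] h1 h2.
  - apply: Or41. lia.
  - apply: Or42. lia.
  - apply: Or43. lia.
  - apply: Or44. lia.
  - exfalso. lia.
all: subst n.
- exact: caseA.
- exact: caseB.
- exact: caseC.
- exact: caseD.
Qed.


Theorem mainTheorem8 :
  (forall s : 'I_3 -> 'I_3 -> nat, arrangement s -> (E_low s = 0 <-> magic s)) /\
  (forall n : nat, (4 <= n)%N ->
     (forall s : 'I_n -> 'I_n -> nat, arrangement s -> magic s -> E_low s = 0) /\
     (exists s : 'I_n -> 'I_n -> nat, arrangement s /\ E_low s = 0 /\ ~ magic s)).
Proof.
split.
- move=> s Har; split; [exact: n3_main | exact: magic_Elow].
- move=> n Hn; split; [move=> s _; exact: magic_Elow | exact: part2].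
Qed.
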